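(* Let $d,\ell$ be positive integers and let $\Gamma=B(d,\ell)$ be the De Bruijn digraph. Fix $x_1,\ldots,x_{\ell-1}\in\mathbb{Z}_d$, not all equal, and let $X=\{x_1x_2\ldots x_{\ell-1}k : k\in\mathbb{Z}_d\}$. For each $j\in\mathbb{Z}_d$ let $\alpha_j$ be a permutation of $\mathbb{Z}_d=\{0,1,\ldots,d-1\}$. Let $\Gamma'=B'(d,\ell)$ be the digraph obtained from $\Gamma$ by changing the out-going arcs of the vertices of $X$ (all other arcs unchanged) so that every vertex $x_1x_2\ldots x_{\ell-1}k\in X$ is adjacent exactly to the $d$ vertices $$x_2x_3\ldots x_{\ell-1}\,\alpha_j(k)\,j,\qquad j=0,1,\ldots,d-1.$$ Then $\Gamma'$ is a $d$-regular digraph with diameter $\ell$ (the same as that of $B(d,\ell)$), and it is $\ell$-reachable.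
   Context: The De Bruijn digraph $B(d,\ell)$ has as vertices all words $a_1a_2\ldots a_\ell$ of length $\ell$ over the alphabet $\mathbb{Z}_d=\{0,1,\ldots,d-1\}$, and there is an arc from $a_1\ldots a_\ell$ to $b_1\ldots b_\ell$ if and only if $a_2\ldots a_\ell=b_1\ldots b_{\ell-1}$ (loops allowed). A digraph is $d$-regular if every vertex has in-degree and out-degree $d$. A digraph with diameter $D$ is $\ell$-reachable if $\ell$ is the smallest integer $m\ge D$ such that for every ordered pair of vertices $u,v$ there is a walk of length exactly $m$ from $u$ to $v$. *)

(* Defs.v *)
From mathcomp Require Import all_boot all_order all_algebra all_fingroup.
Set Implicit Arguments. Unset Strict Implicit. Unset Printing Implicit Defensive.

Definition word (d l : nat) := (l.-tuple 'I_d)%type.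

Definition debruijn (d l : nat) : rel (word d l) :=
  fun u v => behead (val u) == take l.-1 (val v).

Definition inX (d l : nat) (x : seq 'I_d) (u : word d l) : bool :=
  [exists k : 'I_d, val u == rcons x k].

Definition debruijn' (d l : nat) (x : seq 'I_d) (alpha : 'I_d -> {perm 'I_d})
  : rel (word d l) :=
  fun u v => if inX x u then
      [exists k : 'I_d, exists j : 'I_d,
         (val u == rcons x k) && (val v == behead x ++ [:: alpha j k; j])]
    else debruijn u v.

Fixpoint walk (T : finType) (e : rel T) (m : nat) (u v : T) : bool :=
  if m is m'.+1 then [exists w : T, e u w && walk e m' w v] else u == v.

Definition regular (T : finType) (e : rel T) (d : nat) : Prop :=
  forall u : T, #|[set v | e u v]| = d /\ #|[set v | e v u]| = d.

Definition has_diameter (T : finType) (e : rel T) (D : nat) : Prop :=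
  (forall u v : T, exists2 m, m <= D & walk e m u v) /\
  (exists u v : T, forall m, m < D -> ~~ walk e m u v).

Definition reachable (T : finType) (e : rel T) (r : nat) : Prop :=
  exists D, [/\ has_diameter e D, D <= r,
    (forall u v : T, walk e r u v) &
    (forall m, D <= m < r -> exists u v : T, ~~ walk e m u v)].

(* Main.v *)
Require Import Defs.
From mathcomp Require Import all_boot all_order all_algebra all_fingroup.
From mathcomp Require Import zify.
Set Implicit Arguments. Unset Strict Implicit. Unset Printing Implicit Defensive.

Lemma eq_walk (T : finType) (e1 e2 : rel T) : e1 =2 e2 ->
  forall m u v, walk e1 m u v = walk e2 m u v.
Proof.
move=> H; elim=> [|m IH] u v //=; apply: eq_existsb => w; by rewrite H IH.
Qed.

Lemma behead_rcons (T : Type) (s : seq T) x : 0 < size s ->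
  behead (rcons s x) = rcons (behead s) x.
Proof. by case: s. Qed.

Lemma walkS (T : finType) (e : rel T) m u v :
  walk e m.+1 u v = [exists w, e u w && walk e m w v].
Proof. by []. Qed.

Lemma drop_take_gen (T : Type) (s : seq T) m k : m <= k ->
  drop m (take k s) = take (k - m) (drop m s).
Proof. by move=> h; rewrite take_drop subnK. Qed.

Section Main.
Variables (d n : nat) (hd : 0 < d) (xs : seq 'I_d) (sx : size xs = n.+2)
  (alpha : 'I_d -> {perm 'I_d}).
Local Notation l := n.+3.
Let z0 : 'I_d := Ordinal hd.

Definition mk (s : seq 'I_d) : word d l := insubd [tuple of nseq l z0] s.

Lemma mkK s : size s = l -> val (mk s) = s.
Proof. by move=> H; rewrite /mk val_insubd H eqxx. Qed.

Lemma mkK' s : size s = l -> tval (mk s) = s.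
Proof. exact: mkK. Qed.

Lemma wordE (u : word d l) : val u = rcons (take n.+2 u) (nth z0 u n.+2).
Proof. by rewrite -take_nth ?size_tuple // take_oversize // size_tuple. Qed.

Lemma inXE (u : word d l) : inX xs u = (take n.+2 u == xs).
Proof.
apply/existsP/eqP => [[k /eqP->]| <-]; first by rewrite -cats1 take_size_cat.
by exists (nth z0 u n.+2); rewrite -wordE.
Qed.

Local Notation e := (@debruijn' d l xs alpha).

Lemma Qlem (v : word d l) m : m < l -> forall q, size q = n.+2 ->
  drop m q = take (n.+2 - m) v ->
  exists c, (q != xs -> c = nth z0 v (n.+2 - m)) /\ walk e m (mk (rcons q c)) v.
Proof.
elim: m => [|m IH] hm q sq hq.
  exists (nth z0 v n.+2); split=> //=; apply/eqP/val_inj.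
  rewrite mkK; last by rewrite size_rcons sq.
  by rewrite drop0 subn0 in hq; rewrite hq -wordE.
set t := nth z0 v (n.+2 - m.+1).
set q' := rcons (behead q) t.
have sq' : size q' = n.+2 by rewrite size_rcons size_behead sq.
have hq' : drop m q' = take (n.+2 - m) v.
  rewrite /q' drop_rcons ?size_behead ?sq; last by lia.
  rewrite -drop1 drop_drop addn1 hq.
  have -> : n.+2 - m = (n.+2 - m.+1).+1 by lia.
  by rewrite (take_nth z0) // size_tuple; lia.
have [c' [Hc' Hw]] := IH (ltnW hm) q' sq' hq'.
exists (if q == xs then (alpha c')^-1%g t else t).
split; first by move/negbTE->.
rewrite /=; apply/existsP; exists (mk (rcons q' c')); rewrite Hw andbT.
rewrite /debruijn' inXE mkK' ?size_rcons ?sq // -cats1 take_size_cat //.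
case: eqP => [Eq|Neq].
  apply/existsP; exists ((alpha c')^-1%g t); apply/existsP; exists c'.
rewrite mkK ?size_cat ?sq ?addn1 // mkK ?size_rcons ?size_behead ?sq // permKV /q' Eq cats1 eqxx /=.
  by rewrite -!cats1 -catA.
rewrite /debruijn /= mkK' ?size_cat ?sq ?addn1 // mkK' ?size_rcons ?size_behead ?sq //.
by rewrite cats1 behead_rcons ?sq // -[rcons q' c']cats1 (take_size_cat _ sq').
Qed.

Lemma walkl (nc : forall a, rcons (behead xs) a != xs) (u v : word d l) :
  walk e l u v.
Proof.
set k := nth z0 u n.+2.
set a1 := if take n.+2 u == xs then alpha (nth z0 v 0) k else k.
set q1 := rcons (behead (take n.+2 u)) a1.
have stu : size (take n.+2 u) = n.+2 by rewrite size_takel // size_tuple.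
have sq1 : size q1 = n.+2 by rewrite size_rcons size_behead stu.
have hq1 : drop n.+2 q1 = take (n.+2 - n.+2) v.
  by rewrite subnn take0 drop_oversize // sq1.
have [c1 [Hc1 Hw]] := Qlem (ltnSn _) sq1 hq1.
rewrite walkS; apply/existsP; exists (mk (rcons q1 c1)); rewrite Hw andbT.
rewrite /debruijn' inXE.
case: eqP => [Eq|Neq].
  have Hq1 : q1 != xs by rewrite /q1 /a1 Eq eqxx nc.
  rewrite (Hc1 Hq1) subnn.
  apply/existsP; exists k; apply/existsP; exists (nth z0 v 0).
  rewrite {1}wordE Eq eqxx /= mkK ?size_rcons ?size_behead ?stu //.
  by rewrite /q1 /a1 Eq eqxx -!cats1 -catA.
rewrite /debruijn mkK ?size_rcons ?size_behead ?stu // -cats1 (take_size_cat _ sq1).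
rewrite {1}wordE behead_rcons ?stu // /q1 /a1.
by move/eqP/negbTE: Neq ->.
Qed.

Lemma walk_prefix (e' : rel (word d l))
  (He : forall y w, e' y w -> take n.+1 w = behead (take n.+2 y)) m :
  forall (y v : word d l), walk e' m y v ->
  drop m (take n.+2 y) = take (n.+2 - m) v.
Proof.
elim: m => [|m IH] y v; first by move=> /= /eqP->; rewrite drop0 subn0.
rewrite walkS => /existsP [w /andP [Hyw /IH Hw]].
have -> : drop m.+1 (take n.+2 y) = drop m (behead (take n.+2 y)).
  by rewrite -drop1 drop_drop addn1.
rewrite -(He _ _ Hyw) -(take_takel _ (leqnSn n.+1)).
have -> : n.+2 - m.+1 = n.+1 - m by lia.
case: (leqP m n.+1) => hm; last first.
  have -> : n.+1 - m = 0 by lia.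
  by rewrite take0 take_takel // drop_oversize // size_takel ?size_tuple //; lia.
rewrite (drop_take_gen _ hm) Hw take_takel //; lia.
Qed.

Lemma arc_e y w : e y w -> take n.+1 w = behead (take n.+2 y).
Proof.
rewrite /debruijn' inXE; case: eqP => [Eq|_].
  case/existsP=> k /existsP [j /andP [_ /eqP Hw]].
  by rewrite Hw Eq (take_size_cat _ (etrans (size_behead _) (congr1 _ sx))).
move/eqP=> H; rewrite -drop1 drop_take_gen // subn1 /= drop1 H.
by rewrite take_takel.
Qed.

Lemma arc_B (y w : word d l) : debruijn y w -> take n.+1 w = behead (take n.+2 y).
Proof.
move/eqP=> H; rewrite -drop1 drop_take_gen // subn1 /= drop1 H.
by rewrite take_takel.
Qed.

Lemma lower (e' : rel (word d l))
  (He : forall y w, e' y w -> take n.+1 w = behead (take n.+2 y))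
  (a b : 'I_d) (ab : a != b)
  (H2 : forall w, e' (mk (nseq l a)) w -> take n.+2 w = nseq n.+2 a) :
  forall m, m < l -> ~~ walk e' m (mk (nseq l a)) (mk (nseq l b)).
Proof.
move=> m hm; apply/negP => W.
case: (ltnP m n.+2) => hm2.
  have := walk_prefix He W; rewrite !mkK ?size_nseq // take_nseq // drop_nseq.
  rewrite take_nseq; last by lia.
  have -> : n.+2 - m = (n.+1 - m).+1 by lia.
  by case=> Eab; rewrite Eab eqxx in ab.
have Em : m = n.+2 by lia.
move: W; rewrite Em walkS => /existsP [w /andP [Hw W]].
have := walk_prefix He W; rewrite (H2 _ Hw) drop_nseq mkK ?size_nseq //.
have -> : n.+2 - n.+1 = 1 by lia.
by rewrite take_nseq //= => -[Eab]; rewrite Eab eqxx in ab.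
Qed.

Lemma mk_inj s1 s2 : size s1 = l -> size s2 = l -> mk s1 = mk s2 -> s1 = s2.
Proof. by move=> h1 h2 /(congr1 val); rewrite !mkK. Qed.

Lemma outdeg (u : word d l) : #|[set v | e u v]| = d.
Proof.
have sb : size (behead xs) = n.+1 by rewrite size_behead sx.
case: (boolP (take n.+2 u == xs)) => [/eqP Eq|Neq].
  set k := nth z0 u n.+2.
  pose f := fun j : 'I_d => mk (behead xs ++ [:: alpha j k; j]).
  have sf j : size (behead xs ++ [:: alpha j k; j]) = l by rewrite size_cat sb addn2.
  have -> : [set v | e u v] = f @: [set: 'I_d].
    apply/setP => v; rewrite inE /debruijn' inXE Eq eqxx.
    apply/existsP/imsetP => [[k' /existsP [j /andP [/eqP Hu /eqP Hv]]]|[j _ ->]].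
      exists j => //; apply: val_inj; rewrite mkK // Hv.
      move: Hu; rewrite wordE Eq => /rcons_inj [<-] //.
    exists k; apply/existsP; exists j; rewrite {1}wordE Eq eqxx /=.
    by rewrite mkK.
  rewrite card_imset ?cardsT ?card_ord // => j1 j2 /mk_inj.
  move=> /(_ (sf j1) (sf j2)) /(congr1 (last z0)).
  by rewrite !last_cat.
pose f := fun j : 'I_d => mk (rcons (behead u) j).
have sbu : size (behead u) = n.+2 by rewrite size_behead size_tuple.
have sf j : size (rcons (behead u) j) = l by rewrite size_rcons sbu.
have -> : [set v | e u v] = f @: [set: 'I_d].
  apply/setP => v; rewrite inE /debruijn' inXE (negbTE Neq) /debruijn.
  apply/eqP/imsetP => [H|[j _ ->]].
    exists (nth z0 v n.+2) => //; apply: val_inj; rewrite mkK // H.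
    by rewrite -wordE.
  by rewrite mkK // -cats1 take_size_cat.
rewrite card_imset ?cardsT ?card_ord // => j1 j2 /mk_inj.
by move=> /(_ (sf j1) (sf j2)) /rcons_inj [].
Qed.

Lemma indeg (v : word d l) : #|[set u | e u v]| = d.
Proof.
have sb : size (behead xs) = n.+1 by rewrite size_behead sx.
have xsE : xs = nth z0 xs 0 :: behead xs by case: (xs) sx.
have stv : size (take n.+2 v) = n.+2 by rewrite size_takel // size_tuple.
have sg z : size (z :: take n.+2 v) = l by rewrite /= stv.
have srx k : size (rcons xs k) = l by rewrite size_rcons sx.
have take_rx k : take n.+2 (rcons xs k) = xs by rewrite -cats1 take_size_cat.
set vl := nth z0 v n.+2.
set vm := nth z0 v n.+1.
have vE : val v = behead xs ++ [:: vm; vl] ->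
  forall k, val v = behead xs ++ [:: alpha vl ((alpha vl)^-1%g vm); vl].
  by move=> H k; rewrite permKV.
pose f := fun z : 'I_d => if take n.+2 (z :: take n.+2 v) == xs
  then mk (rcons xs ((alpha vl)^-1%g vm)) else mk (z :: take n.+2 v).
have -> : [set u | e u v] = f @: [set: 'I_d].
  apply/setP => u; rewrite inE; apply/idP/imsetP.
    case: (boolP (take n.+2 u == xs)) => [/eqP Eq|Neq].
      rewrite /debruijn' inXE Eq eqxx.
      case/existsP=> k /existsP [j /andP [/eqP Hu /eqP Hv]].
      exists (nth z0 xs 0) => //.
      have Htv : take n.+2 v = rcons (behead xs) (alpha j k).
        rewrite Hv take_cat sb.
        have -> : (n.+2 < n.+1) = false by lia.
        have -> : n.+2 - n.+1 = 1 by lia.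
        by rewrite /= cats1.
      have Hvl : vl = j by rewrite /vl Hv nth_cat sb ltnNge leqnSn /= subSnn.
      have Hvm : vm = alpha j k by rewrite /vm Hv nth_cat sb ltnn subnn.
      rewrite /f Htv -rcons_cons -xsE take_rx eqxx Hvl Hvm permK.
      by apply: val_inj; rewrite mkK.
    rewrite /debruijn' inXE (negbTE Neq) /debruijn => /eqP H.
    have uE : val u = nth z0 u 0 :: take n.+2 v.
      have H' : behead u = take n.+2 v := H.
      by rewrite -H'; case: u {H H' Neq} => [[|a s] ?].
    exists (nth z0 u 0) => //.
    rewrite /f -uE (negbTE Neq).
    by apply: val_inj; rewrite mkK // size_tuple.
  case=> z _ ->; rewrite /f; case: ifP => [/eqP C|C].
    rewrite /debruijn' inXE mkK' // take_rx eqxx.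
    apply/existsP; exists ((alpha vl)^-1%g vm); apply/existsP; exists vl.
    rewrite mkK // eqxx /= permKV.
    have Hb : behead xs = take n.+1 v.
      by rewrite -C /= take_takel.
    by rewrite Hb {1}wordE (take_nth z0) ?size_tuple // -!cats1 -catA.
  rewrite /debruijn' inXE mkK' // C /debruijn mkK //.
rewrite card_imset ?cardsT ?card_ord // => z1 z2.
rewrite /f; case: ifP => C1; case: ifP => C2.
- by move/eqP: C1 => C1; move/eqP: C2; rewrite -C1 /= => -[].
- move/mk_inj => /(_ (srx _) (sg _)) /(congr1 (take n.+2)).
  by rewrite take_rx => E; rewrite -E eqxx in C2.
- move/mk_inj => /(_ (sg _) (srx _)) /(congr1 (take n.+2)).
  by rewrite take_rx => E; rewrite E eqxx in C1.
- by move/mk_inj => /(_ (sg _) (sg _)) [].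
Qed.

Lemma deb_eq : (@debruijn' d l xs (fun _ => 1%g)) =2 (@debruijn d l).
Proof.
move=> u v; rewrite /debruijn' inXE; case: eqP => // Eq.
have sb : size (behead xs) = n.+1 by rewrite size_behead sx.
rewrite /debruijn; apply/idP/eqP.
  case/existsP=> k /existsP [j /andP [/eqP Hu /eqP Hv]].
  rewrite perm1 in Hv.
  have Hv' : tval v = behead xs ++ [:: k; j] := Hv.
  rewrite Hu Hv behead_rcons ?sx // /= take_cat sb.
  have -> : (n.+2 < n.+1) = false by lia.
  have -> : n.+2 - n.+1 = 1 by lia.
  by rewrite /= cats1.
move=> H.
have H' : behead u = take n.+2 v := H.
apply/existsP; exists (nth z0 u n.+2); apply/existsP; exists (nth z0 v n.+2).
rewrite perm1 {1}wordE Eq eqxx /=.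
rewrite [X in X == _]wordE -H' {1}wordE Eq behead_rcons ?sx //.
by rewrite -!cats1 -catA.
Qed.

End Main.

Lemma nonconst (d n : nat) (x : (n.+2).-tuple 'I_d)
  (hx : exists i j : 'I_(n.+2), tnth x i != tnth x j) :
  forall a, rcons (behead x) a != x.
Proof.
move=> a; apply/eqP => E.
have H i : i < n.+2 -> forall z, nth z x i = nth z x 0.
  elim: i => [//|i IH] hi z.
  rewrite -(IH (ltnW hi) z) -[in RHS]E nth_rcons size_behead size_tuple.
  have -> : i < n.+1 by lia.
  by rewrite nth_behead.
case: hx => i [j]; rewrite (tnth_nth (tnth x i)) (tnth_nth (tnth x i) x j).
by rewrite !H // eqxx.
Qed.


Lemma rcons_nseq' (T : Type) k (a : T) : rcons (nseq k a) a = nseq k.+1 a.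
Proof. by elim: k => //= k ->. Qed.

Theorem mainTheorem6 (d l : nat) (hd : 0 < d) (hl : 0 < l)
  (x : (l.-1).-tuple 'I_d)
  (hx : exists i j : 'I_(l.-1), tnth x i != tnth x j)
  (alpha : 'I_d -> {perm 'I_d}) :
  regular (@debruijn' d l x alpha) d /\
  has_diameter (@debruijn' d l x alpha) l /\
  has_diameter (@debruijn d l) l /\
  reachable (@debruijn' d l x alpha) l.
Proof.
case: l hl x hx => [//|[|[|n]]] _ x hx.
- by case: hx => -[].
- by case: hx => i [j]; rewrite !ord1 eqxx.
have sx : size (val x) = n.+2 := size_tuple x.
have nc := nonconst hx.
case: (hx) => i [j ab].
set a := tnth x i; set b := tnth x j.
have Ha : take n.+2 (mk n hd (nseq n.+3 a)) = nseq n.+2 a.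
  by rewrite mkK ?size_nseq // take_nseq.
have Hna : nseq n.+2 a != val x.
  by apply/eqP => E; move: (nc a); rewrite -E /= rcons_nseq' eqxx.
have H2B : forall w, debruijn (mk n hd (nseq n.+3 a)) w -> take n.+2 w = nseq n.+2 a.
  move=> w /eqP H.
  have H' : behead (mk n hd (nseq n.+3 a)) = take n.+2 w := H.
  by rewrite -H' mkK ?size_nseq.
have H2 : forall w, debruijn' (val x) alpha (mk n hd (nseq n.+3 a)) w ->
    take n.+2 w = nseq n.+2 a.
  move=> w; rewrite /debruijn' (inXE hd sx); case: eqP => [E|_]; last exact: H2B.
  by move: E; rewrite ?mkK ?mkK' ?size_nseq // take_nseq // => E; rewrite E eqxx in Hna.
have hdE : has_diameter (@debruijn' d n.+3 (val x) alpha) n.+3.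
  split; first by move=> u v; exists n.+3 => //; have := walkl hd sx alpha nc u v.
  exists (mk n hd (nseq n.+3 a)), (mk n hd (nseq n.+3 b)).
  by have := lower sx (arc_e hd sx (alpha:=alpha)) ab H2.
split; first by move=> u; split; [by have := outdeg hd sx alpha u | by have := indeg hd sx alpha u].
split; first exact: hdE.
split.
  split.
    move=> u v; exists n.+3 => //.
    rewrite -(eq_walk (deb_eq hd sx)).
    by have := walkl hd sx (fun _ => 1%g) nc u v.
  exists (mk n hd (nseq n.+3 a)), (mk n hd (nseq n.+3 b)).
  by have := lower sx (@arc_B d n) ab H2B.
exists n.+3; split => //.
  by move=> u v; have := walkl hd sx alpha nc u v.
by move=> m /andP [h1 h2]; lia.
Qed.
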